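(* Let $R_1,R_2$ be commutative rings with nonzero identity, $I_1$ a proper ideal of $R_1$, $I_2$ a proper ideal of $R_2$, $R=R_1\times R_2$ and $I=I_1\times I_2$. If $\Gamma''_{I_1}(R_1)$ or $\Gamma''_{I_2}(R_2)$ is not planar, then $\Gamma''_I(R)$ is not planar.
   Context: $R_1\times R_2$ has componentwise operations. For a commutative ring $S$ and an ideal $J$ of $S$, $\Gamma''_J(S)$ is the simple undirected graph whose vertex set is $\{x\in S\setminus J : xS+J\neq S\}$, with distinct vertices $x,y$ adjacent if and only if $x\notin yS+J$ and $y\notin xS+J$. A graph is planar if it can be drawn in the plane with edges meeting only at their endpoints. *)

(* Defs.v *)
From Stdlib Require Import Reals.
From mathcomp Require Import all_boot all_order all_algebra.
Set Implicit Arguments. Unset Strict Implicit. Unset Printing Implicit Defensive.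
Import GRing.Theory.

Definition is_idealP (S : comNzRingType) (J : pred S) : Prop :=
  (0%R \in J) /\
  (forall a b, a \in J -> b \in J -> (a + b)%R \in J) /\
  (forall r a, a \in J -> (r * a)%R \in J).

Definition proper_idealP (S : comNzRingType) (J : pred S) : Prop :=
  is_idealP J /\ ~ (forall x : S, x \in J).

Definition in_xS_J (S : comNzRingType) (J : pred S) (x z : S) : Prop :=
  exists r j, j \in J /\ z = (x * r + j)%R.

(* vertex set of Gamma''_J(S): x notin J and xS + J <> S *)
Definition gvert (S : comNzRingType) (J : pred S) (x : S) : Prop :=
  x \notin J /\ ~ (forall z : S, in_xS_J J x z).

Definition GVert (S : comNzRingType) (J : pred S) : Type :=
  { x : S | gvert J x }.

Definition gadj (S : comNzRingType) (J : pred S) (u v : GVert J) : Prop :=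
  proj1_sig u <> proj1_sig v /\
  ~ in_xS_J J (proj1_sig v) (proj1_sig u) /\
  ~ in_xS_J J (proj1_sig u) (proj1_sig v).

Definition prod_ideal (S1 S2 : comNzRingType) (J1 : pred S1) (J2 : pred S2)
  : pred (S1 * S2)%type := fun z => (z.1 \in J1) && (z.2 \in J2).

Local Open Scope R_scope.

Definition in01 (t : R) : Prop := 0 <= t <= 1.
Definition in01o (t : R) : Prop := 0 < t < 1.

Definition cont01 (g : R -> R * R) : Prop :=
  forall t, in01 t -> forall eps, 0 < eps -> exists delta, 0 < delta /\
    forall s, in01 s -> Rabs (s - t) < delta ->
      Rabs (fst (g s) - fst (g t)) < eps /\ Rabs (snd (g s) - snd (g t)) < eps.

(* A simple undirected graph (V, adj) is planar: vertices go to distinct points,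
   each edge {x,y} to a simple arc (continuous, injective on [0,1]) from x to y,
   whose interior avoids all vertex points, and interiors of arcs of distinct
   edges are disjoint. Hence edges meet only at common endpoints. *)
Definition planar (V : Type) (adj : V -> V -> Prop) : Prop :=
  exists (f : V -> R * R) (arc : V -> V -> R -> R * R),
    (forall x y, f x = f y -> x = y) /\
    (forall x y, adj x y ->
       cont01 (arc x y) /\ arc x y 0 = f x /\ arc x y 1 = f y /\
       (forall s t, in01 s -> in01 t -> arc x y s = arc x y t -> s = t) /\
       (forall t w, in01o t -> arc x y t <> f w)) /\
    (forall x y u v, adj x y -> adj u v ->
       ~ (x = u /\ y = v) -> ~ (x = v /\ y = u) ->
       forall s t, in01o s -> in01o t -> arc x y s <> arc u v t).

(* Main.v *)
Require Import Defs.
From Stdlib Require Import Reals.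
From mathcomp Require Import all_boot all_order all_algebra.
From Stdlib Require Import ProofIrrelevance.
Import GRing.Theory.

Lemma planar_sub (V W : Type) (adj : V -> V -> Prop) (adjW : W -> W -> Prop)
  (phi : V -> W) : (forall x y, phi x = phi y -> x = y) ->
  (forall x y, adj x y -> adjW (phi x) (phi y)) -> planar adjW -> planar adj.
Proof.
move=> inj hadj [f [arc [finj [harc hdis]]]].
exists (fun x => f (phi x)), (fun x y => arc (phi x) (phi y)).
split; first by move=> x y /finj /inj.
split.
  move=> x y /hadj /harc [h1 [h2 [h3 [h4 h5]]]].
  by repeat split => //; move=> t w ht; apply: h5.
move=> x y u v axy auv n1 n2 s t hs ht.
apply: (hdis _ _ _ _ (hadj _ _ axy) (hadj _ _ auv)) => //.
- by move=> [/inj e1 /inj e2]; apply: n1.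
- by move=> [/inj e1 /inj e2]; apply: n2.
Qed.

Lemma one_notin (S : comNzRingType) (J : pred S) : proper_idealP J -> (1%R \in J) = false.
Proof.
move=> [[_ [_ hm]] hn]; apply/negP => h1; apply: hn => x.
by rewrite -(mulr1 x); apply: hm.
Qed.

Section S.
Variables (R1 R2 : comNzRingType) (I1 : pred R1) (I2 : pred R2).
Hypothesis P1 : proper_idealP I1.
Hypothesis P2 : proper_idealP I2.

Lemma vert1 x : gvert I1 x -> gvert (prod_ideal I1 I2) (x, 0%R).
Proof.
move=> [hx _]; split.
  by rewrite /in_mem /= /prod_ideal /= (negbTE hx).
move=> H; have [r [j [hj e]]] := H (0%R, 1%R).
have e2 := f_equal snd e; simpl in e2.
move: hj; rewrite /in_mem /= /prod_ideal => /andP [_ hj2].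
have : j.2 = 1%R by rewrite e2 mul0r add0r.
move=> ej; move: hj2; rewrite ej.
by rewrite (@one_notin _ I2 P2).
Qed.

Lemma vert2 x : gvert I2 x -> gvert (prod_ideal I1 I2) (0%R, x).
Proof.
move=> [hx _]; split.
  by rewrite /in_mem /= /prod_ideal /= (negbTE hx) andbF.
move=> H; have [r [j [hj e]]] := H (1%R, 0%R).
have e2 := f_equal fst e; simpl in e2.
move: hj; rewrite /in_mem /= /prod_ideal => /andP [hj2 _].
have : j.1 = 1%R by rewrite e2 mul0r add0r.
move=> ej; move: hj2; rewrite ej.
by rewrite (@one_notin _ I1 P1).
Qed.

Definition phi1 (u : GVert I1) : GVert (prod_ideal I1 I2) :=
  exist _ (proj1_sig u, 0%R) (@vert1 _ (proj2_sig u)).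
Definition phi2 (u : GVert I2) : GVert (prod_ideal I1 I2) :=
  exist _ (0%R, proj1_sig u) (@vert2 _ (proj2_sig u)).

Lemma pl1 : planar (@gadj _ (prod_ideal I1 I2)) -> planar (@gadj R1 I1).
Proof.
apply: (@planar_sub _ _ _ _ phi1).
  move=> [x hx] [y hy] /(f_equal (fun z => (proj1_sig z).1)) /= e.
  subst y; f_equal; apply: proof_irrelevance.
move=> [x hx] [y hy]; rewrite /gadj /= => [[ne [n1 n2]]].
split; first by move=> [].
split.
  move=> [r [j [hj e]]]; apply: n1; exists r.1, j.1; split.
    by move: hj; rewrite /in_mem /= /prod_ideal => /andP [].
  by have := f_equal fst e.
move=> [r [j [hj e]]]; apply: n2; exists r.1, j.1; split.
  by move: hj; rewrite /in_mem /= /prod_ideal => /andP [].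
by have := f_equal fst e.
Qed.

Lemma pl2 : planar (@gadj _ (prod_ideal I1 I2)) -> planar (@gadj R2 I2).
Proof.
apply: (@planar_sub _ _ _ _ phi2).
  move=> [x hx] [y hy] /(f_equal (fun z => (proj1_sig z).2)) /= e.
  subst y; f_equal; apply: proof_irrelevance.
move=> [x hx] [y hy]; rewrite /gadj /= => [[ne [n1 n2]]].
split; first by move=> [].
split.
  move=> [r [j [hj e]]]; apply: n1; exists r.2, j.2; split.
    by move: hj; rewrite /in_mem /= /prod_ideal => /andP [].
  by have := f_equal snd e.
move=> [r [j [hj e]]]; apply: n2; exists r.2, j.2; split.
  by move: hj; rewrite /in_mem /= /prod_ideal => /andP [].
by have := f_equal snd e.
Qed.
End S.

Theorem corollary2p4 (R1 R2 : comNzRingType) (I1 : pred R1) (I2 : pred R2) :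
  proper_idealP I1 -> proper_idealP I2 ->
  (~ planar (@gadj R1 I1) \/ ~ planar (@gadj R2 I2)) ->
  ~ planar (@gadj (R1 * R2)%type (prod_ideal I1 I2)).
Proof.
move=> P1 P2 [h|h] hp; apply: h.
  exact (@pl1 R1 R2 I1 I2 P2 hp).
exact (@pl2 R1 R2 I1 I2 P1 hp).
Qed.
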